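(* Let $s_1,\dots,s_{d-1}$ be positive integers, $s_0=s_d=1$, with $s_{i-1}s_i\le n_i$ for all $i$, and let $T=\sum_{\alpha_1,\dots,\alpha_{d-1}} e_1^{\alpha_1}\otimes e_2^{\iota_2(\alpha_1,\alpha_2)}\otimes\cdots\otimes e_{d-1}^{\iota_{d-1}(\alpha_{d-2},\alpha_{d-1})}\otimes e_d^{\alpha_{d-1}}$. The stabilizer $H=\{g\in G:g\cdot T=T\}$ consists exactly of the elements $$\begin{bmatrix}A_1&M_1\\0&B_1\end{bmatrix}\times\begin{bmatrix}A_1^{-\mathsf T}\otimes A_2&M_2\\0&B_2\end{bmatrix}\times\cdots\times\begin{bmatrix}A_{d-2}^{-\mathsf T}\otimes A_{d-1}&M_{d-1}\\0&B_{d-1}\end{bmatrix}\times\begin{bmatrix}A_{d-1}^{-\mathsf T}&M_d\\0&B_d\end{bmatrix},$$ where $A_i\in\mathrm{GL}(s_i)$ ($1\le i\le d-1$), $B_i\in\mathrm{GL}(n_i-s_{i-1}s_i)$, and $M_i$ are arbitrary $s_{i-1}s_i\times(n_i-s_{i-1}s_i)$ matrices.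
   Context: Fix integers $d\ge 3$ and $n_1,\dots,n_d\ge 2$. $V=\mathbb{R}^{n_1}\otimes\cdots\otimes\mathbb{R}^{n_d}$, and $G=\mathrm{GL}(n_1)\times\cdots\times\mathrm{GL}(n_d)$ acts on $V$ by $(g_1,\dots,g_d)\cdot(v_1\otimes\cdots\otimes v_d)=(g_1v_1)\otimes\cdots\otimes(g_dv_d)$, extended linearly. $e_i^1,\dots,e_i^{n_i}$ is the standard basis of $\mathbb{R}^{n_i}$. For $2\le i\le d-1$, $\iota_i:[s_{i-1}]\times[s_i]\to[s_{i-1}s_i]$ is the lexicographic bijection with the first argument most significant, and the Kronecker product uses the matching convention $(A\otimes B)_{\iota_i(a,b),\iota_i(a',b')}=A_{aa'}B_{bb'}$. *)

(* Defs.v *)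
From HB Require Import structures.
From mathcomp Require Import all_boot all_order all_algebra.
From mathcomp Require Import reals.
Set Implicit Arguments. Unset Strict Implicit. Unset Printing Implicit Defensive.
Import Order.TTheory GRing.Theory Num.Theory.
Local Open Scope ring_scope.

(* Modes are numbered 0..d-1 (paper: 1..d); mode k has dimension n k.
   Bond dimensions: s 0 = s d = 1, s 1, ..., s (d-1) (paper s_0..s_d).
   Mode k carries the bond pair (s k, s k.+1), paper (s_{i-1}, s_i) with i = k+1. *)

Definition idx (d : nat) (n : nat -> nat) := {dffun forall k : 'I_d, 'I_(n k)}.

Definition tensor (R : pzRingType) (d : nat) (n : nat -> nat) := idx d n -> R.

Definition act (R : pzRingType) (d : nat) (n : nat -> nat)
  (g : forall k : 'I_d, 'M[R]_(n k)) (T : tensor R d n) : tensor R d n :=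
  fun i => \sum_(j : idx d n) (\prod_(k : 'I_d) g k (i k) (j k)) * T j.

Definition iota_lex (q a b : nat) : nat := a * q + b.

Definition basis_coord (R : pzRingType) (N : nat) (m : nat) (i : 'I_N) : R :=
  (nat_of_ord i == m)%:R.

(* Bond indices alpha_0, ..., alpha_d with alpha_j < s j; since s 0 = s d = 1,
   alpha_0 = alpha_d = 0 and the sum ranges exactly over alpha_1..alpha_{d-1}. *)
Definition bondidx (d : nat) (s : nat -> nat) := {dffun forall j : 'I_d.+1, 'I_(s j)}.

(* The tensor T = sum_alpha e_1^{alpha_1} (x) e_2^{iota(alpha_1,alpha_2)} (x) ... (x) e_d^{alpha_{d-1}},
   written uniformly as: mode k uses index iota_{s (k+1)}(alpha_k, alpha_{k+1}). *)
Definition TT (R : pzRingType) (d : nat) (n s : nat -> nat) : tensor R d n :=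
  fun i => \sum_(a : bondidx d s)
     \prod_(k : 'I_d)
        basis_coord R
          (iota_lex (s k.+1) (a (widen_ord (leqnSn d) k)) (a (lift ord0 k))) (i k).

(* Kronecker product with (A (x) B)_{iota(a,b), iota(a',b')} = A_{a a'} B_{b b'}. *)
Definition kron (R : pzRingType) (p q p' q' : nat)
  (A : 'M[R]_(p, p')) (B : 'M[R]_(q, q')) : 'M[R]_(p * q, p' * q') :=
  \matrix_(i, j) \sum_(a < p) \sum_(b < q) \sum_(a' < p') \sum_(b' < q')
      ((nat_of_ord i == iota_lex q a b) && (nat_of_ord j == iota_lex q' a' b'))%:R
        * A a a' * B b b'.

Definition blk (R : pzRingType) (n r : nat) (h : (r <= n)%N)
  (X : 'M[R]_r) (M : 'M[R]_(r, n - r)) (B : 'M[R]_(n - r)) : 'M[R]_n :=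
  castmx (subnKC h, subnKC h) (block_mx X M 0 B).

Definition stab_form (R : realType) (d : nat) (n s : nat -> nat)
  (hsn : forall k : 'I_d, (s k * s k.+1 <= n k)%N)
  (g : forall k : 'I_d, 'M[R]_(n k)) : Prop :=
  exists A : forall j : nat, 'M[R]_(s j),
    [/\ A 0%N = 1%:M, A d = 1%:M,
        (forall j : nat, (0 < j < d)%N -> A j \in unitmx) &
        forall k : 'I_d,
          exists (B : 'M[R]_(n k - s k * s k.+1))
                 (M : 'M[R]_(s k * s k.+1, n k - s k * s k.+1)),
            B \in unitmx /\
            g k = blk (hsn k) (kron (invmx (A k))^T (A k.+1)) M B].

(* Main.v *)
Require Import Defs.
From HB Require Import structures.
From mathcomp Require Import all_boot all_order all_algebra.
From mathcomp Require Import reals.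
From Stdlib Require Import FunctionalExtensionality.
From mathcomp Require Import zify ring.
From Stdlib Require Import Lia.
Import Order.TTheory GRing.Theory Num.Theory.
Local Open Scope ring_scope.


Lemma prod_bool (R : comPzRingType) (I : finType) (b : I -> bool) :
  \prod_(k : I) ((b k)%:R : R) = ([forall k, b k])%:R.
Proof.
case: (boolP [forall k, b k]) => [/forallP H|/forallPn [k hk]].
  by rewrite big1 // => k _; rewrite H.
by rewrite (bigD1 k) //= (negbTE hk) mul0r.
Qed.

Lemma sum_delta (R : pzRingType) (I : finType) (F : I -> R) (y : I) :
  \sum_(x : I) F x * (x == y)%:R = F y.
Proof.
rewrite (bigD1 y) //= eqxx mulr1 big1 ?addr0 // => x /negbTE ->.
by rewrite mulr0.
Qed.

Lemma sum_delta2 (R : pzRingType) (I : finType) (F : I -> R) (y : I) (a b : R) :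
  \sum_(x : I) F x * ((x == y)%:R * a * b) = F y * (a * b).
Proof.
rewrite (bigD1 y) //= eqxx mul1r big1 ?addr0 // => x /negbTE ->.
by rewrite mul0r mul0r mulr0.
Qed.

Lemma sum_split (R : pzRingType) (N S1 S2 e : nat) (F : nat -> R) : (S1 * S2 <= N)%N -> (e < S2)%N ->
  \sum_(x < N) (((x %/ S2 < S1) && (x %% S2 == e))%N)%:R * F x = \sum_(c < S1) F (c * S2 + e)%N.
Proof.
move=> hN he.
transitivity (\sum_(x < N | ((x %/ S2 < S1) && (x %% S2 == e))%N) F x).
  rewrite [RHS]big_mkcond /=; apply: eq_bigr => x _.
  by case: ifP => _; rewrite ?mul1r ?mul0r.
have hS2 : (0 < S2)%N by lia.
case: S1 hN => [|S1] hN.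
  by rewrite big_ord0 big_pred0 // => x; rewrite ltn0.
have hlt : forall c : 'I_S1.+1, (c * S2 + e < N)%N.
  move=> c; apply: (leq_trans _ hN).
  have := ltn_ord c; nia.
rewrite (reindex_onto (fun c : 'I_S1.+1 => Ordinal (hlt c))
                     (fun x : 'I_N => insubd ord0 (x %/ S2)%N)) /=.
  apply: eq_bigl => c.
  rewrite divnMDl // divn_small // addn0 ltn_ord modnMDl modn_small // eqxx /=.
  by apply/eqP/val_inj; rewrite /= val_insubd ltn_ord.
move=> x /andP[h1 /eqP h2]; apply: val_inj => /=.
by rewrite val_insubd h1 -h2 -divn_eq.
Qed.

Definition fent (R : pzRingType) (p q : nat) (F : 'I_p -> 'I_q -> R) (a b : nat) : R :=
  oapp (fun a' : 'I_p => oapp (fun b' : 'I_q => F a' b') 0 (insub b)) 0 (insub a).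
Arguments fent {R p q} F a b.

Definition ent (R : pzRingType) (p q : nat) (M : 'M[R]_(p, q)) (a b : nat) : R :=
  fent (fun a' b' => M a' b') a b.
Arguments ent {R p q} M a b.

Lemma fentE (R : pzRingType) (p q : nat) (F : 'I_p -> 'I_q -> R) (a : 'I_p) (b : 'I_q) :
  fent F a b = F a b.
Proof. by rewrite /fent !valK. Qed.

Lemma entE (R : pzRingType) (p q : nat) (M : 'M[R]_(p, q)) (a : 'I_p) (b : 'I_q) :
  ent M a b = M a b.
Proof. exact: fentE. Qed.

Lemma fent_outl (R : pzRingType) (p q : nat) (F : 'I_p -> 'I_q -> R) (a b : nat) :
  (p <= a)%N -> fent F a b = 0.
Proof. by move=> h; rewrite /fent (@insubF _ _ 'I_p a) //; lia. Qed.

Lemma fent_outr (R : pzRingType) (p q : nat) (F : 'I_p -> 'I_q -> R) (a b : nat) :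
  (q <= b)%N -> fent F a b = 0.
Proof.
move=> h; rewrite /fent (@insubF _ _ 'I_q b) //; last by lia.
by case: insub.
Qed.

Lemma ent_tr (R : pzRingType) (p q : nat) (M : 'M[R]_(p, q)) (a b : nat) :
  ent M^T a b = ent M b a.
Proof.
rewrite /ent /fent.
case: (@insubP _ _ 'I_q a) => [a' _ _|_]; case: (@insubP _ _ 'I_p b) => [b' _ _|_] //=.
by rewrite mxE.
Qed.

Lemma sum_pick (R : pzRingType) (p : nat) (G : 'I_p -> R) (v : nat) :
  \sum_(a : 'I_p) ((v == a)%N)%:R * G a = oapp G 0 (insub v).
Proof.
case: (@insubP _ _ 'I_p v) => [a' _ <-|hv] /=.
  rewrite (bigD1 a') //= eqxx mul1r big1 ?addr0 // => a ha.
  by rewrite (_ : (val a' == val a) = false) ?mul0r //; apply/negbTE; rewrite eq_sym.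
rewrite big1 // => a _; have : (v == a)%N = false.
  by apply/negbTE/negP => /eqP E; move: hv; rewrite E ltn_ord.
by move=> ->; rewrite mul0r.
Qed.

Lemma dec_sum (R : pzRingType) (p q : nat) (F : 'I_p -> 'I_q -> R) (v : nat) :
  \sum_(a : 'I_p) \sum_(b : 'I_q) ((v == a * q + b)%N)%:R * F a b = fent F (v %/ q) (v %% q).
Proof.
case: (posnP q) => hq.
  move: F; rewrite hq => F.
  rewrite big1 => [|a _]; last by rewrite big_ord0.
  rewrite /fent; case: (@insub _ _ 'I_0 (v %% 0)%N) => [[m hm]|] //=; last by case: insub.
transitivity (\sum_(a : 'I_p) ((v %/ q == a)%N)%:R * \sum_(b : 'I_q) ((v %% q == b)%N)%:R * F a b).
  apply: eq_bigr => a _; rewrite big_distrr /=; apply: eq_bigr => b _.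
  rewrite mulrA -natrM mulnb; congr ((nat_of_bool _)%:R * _).
  apply/eqP/andP => [->|[/eqP h1 /eqP h2]]; last by rewrite (divn_eq v q) h1 h2.
  by rewrite divnMDl // divn_small ?addn0 ?modnMDl ?modn_small.
under eq_bigr => a _ do rewrite sum_pick.
by rewrite sum_pick.
Qed.

Lemma kronE (R : comPzRingType) p q p' q' (A : 'M[R]_(p,p')) (B : 'M[R]_(q,q'))
  (i : 'I_(p * q)) (j : 'I_(p' * q')) :
  kron A B i j = ent A (i %/ q)%N (j %/ q')%N * ent B (i %% q)%N (j %% q')%N.
Proof.
rewrite mxE.
transitivity (\sum_(a < p) \sum_(b < q) ((nat_of_ord i == a * q + b)%N)%:R *
   (\sum_(a' < p') \sum_(b' < q') ((nat_of_ord j == a' * q' + b')%N)%:R * (A a a' * B b b'))).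
  apply: eq_bigr => a _; apply: eq_bigr => b _; rewrite big_distrr /=.
  apply: eq_bigr => a' _; rewrite big_distrr /=; apply: eq_bigr => b' _.
  rewrite /iota_lex -mulnb natrM; ring.
under eq_bigr => a _ do under eq_bigr => b _ do rewrite dec_sum.
rewrite dec_sum /ent /fent.
case: insub => [a|] /=; case: insub => [b|] /=; case: insub => [a'|] /=;
  case: insub => [b'|] /=; by rewrite ?mul0r ?mulr0.
Qed.
Lemma blkE (R : pzRingType) (N r : nat) (h : (r <= N)%N) (X : 'M[R]_r)
  (M : 'M[R]_(r, N - r)) (B : 'M[R]_(N - r)) (y x : 'I_N) :
  blk h X M B y x =
  if (y < r)%N then (if (x < r)%N then ent X y x else ent M y (x - r)%N)
  else (if (x < r)%N then 0 else ent B (y - r)%N (x - r)%N).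
Proof.
rewrite /blk castmxE /block_mx /col_mx /row_mx !mxE.
case: splitP => [i1 /= Ei|i2 /= Ei]; rewrite !mxE; case: splitP => [j1 /= Ej|j2 /= Ej];
  rewrite ?mxE ?Ei ?Ej ?ltn_ord ?addKn ?entE //; rewrite ltnNge leq_addr /= ?entE //.
  by rewrite ltnNge leq_addr.
Qed.

Lemma insub_ord (p a : nat) (h : (a < p)%N) : insub a = Some (Ordinal h) :> option 'I_p.
Proof.
case: (@insubP _ _ 'I_p a) => [u _ ev|]; last by rewrite h.
by congr Some; apply: val_inj.
Qed.

Lemma ent_mx (R : pzRingType) (p q : nat) (F : nat -> nat -> R) (a b : nat) :
  (a < p)%N -> (b < q)%N -> ent (\matrix_(i < p, j < q) F i j) a b = F a b.
Proof. by move=> ha hb; rewrite /ent /fent (insub_ord _ _ ha) (insub_ord _ _ hb) /= mxE. Qed.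

Lemma unit_castmx (R : comUnitRingType) (p q : nat) (e : p = q) (A : 'M[R]_p) :
  (castmx (e, e) A \in unitmx) = (A \in unitmx).
Proof. by case: q / e; rewrite castmx_id. Qed.

Section Main.
Variables (R : realType) (d : nat) (n s : nat -> nat).
Hypothesis hn0 : forall k : 'I_d, (0 < n k)%N.
Hypothesis hs : forall j : nat, (j <= d)%N -> (0 < s j)%N.
Hypothesis hs0 : s 0%N = 1%N.
Hypothesis hsd : s d = 1%N.
Hypothesis hsn : forall k : 'I_d, (s k * s k.+1 <= n k)%N.

Implicit Types (i : idx d n).

Definition iv (i : idx d n) (k : nat) : nat :=
  oapp (fun o : 'I_d => nat_of_ord (i o)) 0%N (insub k).

Lemma iv_ord i (k : 'I_d) : iv i k = i k.
Proof. by rewrite /iv insubT //= => h; congr (nat_of_ord (i _)); apply: val_inj. Qed.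

Lemma iv_out i k : (d <= k)%N -> iv i k = 0%N.
Proof. by move=> h; rewrite /iv insubF // ltnNge h. Qed.

Definition mkidx (phi : nat -> nat) : idx d n :=
  [ffun k => insubd (Ordinal (hn0 k)) (phi k)].

Lemma mkidxE (phi : nat -> nat) (k : 'I_d) : (phi k < n k)%N -> nat_of_ord (mkidx phi k) = phi k.
Proof. by move=> h; rewrite ffunE val_insubd h. Qed.

Lemma iv_mkidx (phi : nat -> nat) : (forall k : 'I_d, phi k < n k)%N -> (forall k : nat, d <= k -> phi k = 0)%N ->
  iv (mkidx phi) = phi.
Proof.
move=> h1 h2; apply: functional_extensionality => k.
case: (ltnP k d) => hk.
  by rewrite (iv_ord _ (Ordinal hk)) mkidxE.
by rewrite iv_out // h2.
Qed.

Definition upd (i : idx d n) (m : 'I_d) (x : 'I_(n m)) : idx d n :=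
  mkidx (fun k => if k == m then nat_of_ord x else iv i k).

Lemma upd_ord i (m : 'I_d) (x : 'I_(n m)) (k : 'I_d) : nat_of_ord (upd i m x k) = if k == m then nat_of_ord x else i k.
Proof.
case: (eqVneq k m) => [->|h].
  by rewrite mkidxE eqxx.
have h' : (k == m :> nat) = false by apply/negbTE.
by rewrite mkidxE h' ?iv_ord.

Qed.

Lemma iv_upd i (m : 'I_d) (x : 'I_(n m)) : iv (upd i m x) = fun k => if k == m :> nat then nat_of_ord x else iv i k.
Proof.
apply: iv_mkidx => [k|k hk].
  by case: eqP => [/val_inj ->|]; rewrite ?iv_ord.
by rewrite ifN ?iv_out // neq_ltn (leq_trans (ltn_ord m) hk) orbT.
Qed.

Lemma upd_id i (m : 'I_d) : upd i m (i m) = i.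
Proof.
apply/ffunP => k; apply: val_inj; rewrite /= upd_ord.
by case: eqP => // ->.
Qed.

Lemma upd_upd i (m : 'I_d) (x z : 'I_(n m)) : upd (upd i m x) m z = upd i m z.
Proof.
apply/ffunP => k; apply: val_inj; rewrite /= !upd_ord.
by case: eqP.
Qed.

Lemma upd_m i (m : 'I_d) (x : 'I_(n m)) : upd i m x m = x.
Proof. by apply: val_inj; rewrite /= upd_ord eqxx. Qed.

Lemma upd_neq i (m : 'I_d) (x : 'I_(n m)) k : k != m -> upd i m x k = i k.
Proof. by move=> h; apply: val_inj; rewrite /= upd_ord (negbTE h). Qed.

Lemma act_step (f f' : forall k : 'I_d, 'M[R]_(n k)) (m : 'I_d) (T : tensor R d n) i :
  (forall k, k != m -> f' k = f k) -> f m = 1%:M ->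
  act f' T i = \sum_(x < n m) f' m (i m) x * act f T (upd i m x).
Proof.
move=> hf hm; rewrite /act.
under [RHS]eq_bigr => x _.
  rewrite big_distrr /=.
  under eq_bigr => j _.
    rewrite (bigD1 m) //= hm upd_m mxE.
    under eq_bigr => k hk do rewrite upd_neq //.
    over.
  over.
rewrite exchange_big /=; apply: eq_bigr => j _.
rewrite (bigD1 m) //=.
rewrite sum_delta2 mulrA; congr (_ * _ * _); apply: eq_bigr => k hk; by rewrite hf.
Qed.

Lemma act_id (T : tensor R d n) i : act (fun k => 1%:M) T i = T i.
Proof.
rewrite /act.
under eq_bigr => j _.
  under eq_bigr => k _ do rewrite mxE.
  rewrite prod_bool.
  have -> : [forall k, i k == j k] = (j == i).
    apply/forallP/eqP => [H|->] //; apply/ffunP => k; exact/esym/eqP/H.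
  rewrite mulrC.
  over.
by rewrite sum_delta.
Qed.

Definition bnd (phi : nat -> nat) (k : nat) : nat :=
  if k is k'.+1 then (phi k' %% s k)%N else 0%N.
Definition cnd (phi : nat -> nat) (k : nat) : bool := (phi k %/ s k.+1 == bnd phi k)%N.
Definition pval (m : nat) (phi : nat -> nat) := all (cnd phi) (iota 0 m).
Definition sval (m : nat) (phi : nat -> nat) :=
  if (m < d)%N then ((phi m %/ s m.+1 < s m) && all (cnd phi) (iota m.+1 (d - m.+1)))%N
  else true.
Definition valid (phi : nat -> nat) := pval d phi.

Lemma bnd_lt phi k : (k <= d)%N -> (bnd phi k < s k)%N.
Proof.
case: k => [|k] hk /=; first by rewrite hs0.
by rewrite ltn_pmod // hs.
Qed.

Lemma bnd_ltI phi (j : 'I_d.+1) : (bnd phi j < s j)%N.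
Proof. exact: bnd_lt (ltn_ord j). Qed.

Lemma hsI (j : 'I_d.+1) : (0 < s j)%N.
Proof. exact: hs (ltn_ord j). Qed.

Definition dec i : bondidx d s :=
  [ffun j : 'I_d.+1 => insubd (Ordinal (hsI j)) (bnd (iv i) j)].

Lemma decE i (j : 'I_d.+1) : nat_of_ord (dec i j) = bnd (iv i) j.
Proof. by rewrite ffunE val_insubd bnd_ltI. Qed.

Lemma TT_key i (a : bondidx d s) :
  [forall k : 'I_d, nat_of_ord (i k) ==
     iota_lex (s k.+1) (a (widen_ord (leqnSn d) k)) (a (lift ord0 k))]
  = (a == dec i) && valid (iv i).
Proof.
apply/idP/idP.
  move/forallP => H.
  have Ha : forall j : 'I_d.+1, nat_of_ord (a j) = bnd (iv i) j.
    case => [[|j] hj] /=.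
      have : (nat_of_ord (a (Ordinal hj)) < 1)%N by rewrite -hs0; exact: ltn_ord.
      by rewrite ltnS leqn0 => /eqP.
    have hjd : (j < d)%N by [].
    have := H (Ordinal hjd).
    have E : lift ord0 (Ordinal hjd) = Ordinal hj by apply: val_inj.
    rewrite E /iota_lex (iv_ord i (Ordinal hjd)) => /eqP ->.
    by rewrite modnMDl modn_small //; exact: (ltn_ord (a (Ordinal hj))).
  apply/andP; split.
    by apply/eqP/ffunP => j; apply: val_inj; rewrite /= decE Ha.
  apply/allP => k; rewrite mem_iota add0n => /andP[_ hk].
  have := H (Ordinal hk); rewrite /cnd (iv_ord i (Ordinal hk)) /iota_lex !Ha lift0 /= => /eqP ->.
  rewrite divnMDl ?hs // divn_small ?addn0 //.
  exact: bnd_lt.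
case/andP => [/eqP -> hv]; apply/forallP => k.
rewrite !decE lift0 /= /iota_lex -(iv_ord i k).
have := allP hv k; rewrite mem_iota add0n ltn_ord => /(_ isT) /eqP <-.
by rewrite -divn_eq.
Qed.

Lemma TTE i : @TT R d n s i = (valid (iv i))%:R :> R.
Proof.
rewrite /TT.
under eq_bigr => a _ do rewrite /basis_coord prod_bool TT_key.
case: (boolP (valid (iv i))) => hv.
  under eq_bigr => a _ do rewrite andbT.
  by rewrite (bigD1 (dec i)) //= eqxx big1 ?addr0 // => a /negbTE ->.
by rewrite big1 // => a _; rewrite andbF.
Qed.

Lemma pval_ext (m : nat) (phi phi' : nat -> nat) : (forall k, (k < m)%N -> phi k = phi' k) ->
  pval m phi = pval m phi'.
Proof.
move=> h; apply: eq_in_all => k; rewrite mem_iota add0n => /andP[_ hk].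
rewrite /cnd h //; case: k hk => [|k] hk //=.
by rewrite h // ltnW.
Qed.

Lemma sval_ext (m : nat) (phi phi' : nat -> nat) : (forall k, (m <= k)%N -> phi k = phi' k) ->
  sval m phi = sval m phi'.
Proof.
move=> h; rewrite /sval; case: ifP => // hm.
rewrite h //; congr (_ && _); apply: eq_in_all => k; rewrite mem_iota => /andP[hk _].
rewrite /cnd h ?(ltnW hk) //; case: k hk => [|k] hk //=.
by rewrite h.
Qed.

Lemma pvalS (m : nat) phi : pval m.+1 phi = pval m phi && cnd phi m.
Proof. by rewrite /pval -addn1 iotaD all_cat /= andbT. Qed.

Lemma svalS (m : nat) phi : (m < d)%N ->
  sval m phi = [&& (phi m %/ s m.+1 < s m)%N, (m.+1 < d)%N ==> cnd phi m.+1 & sval m.+1 phi].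
Proof.
move=> hm; rewrite /sval hm.
case: (ltnP m.+1 d) => hm1 /=.
  have -> : (d - m.+1 = (d - m.+2).+1)%N by rewrite subnSK.
  rewrite /= ; case hc: (cnd phi m.+1) => //=.
  have : (phi m.+1 %/ s m.+2 < s m.+1)%N.
    by rewrite (eqP hc) /= ltn_pmod // hs // ltnW.
  by move=> ->.
have -> : m.+1 = d by apply/eqP; rewrite eqn_leq hm hm1.
by rewrite subnn /= ?/sval ?ltnn.
Qed.

Lemma sval_d phi : sval d phi.
Proof. by rewrite /sval ltnn. Qed.

Lemma pval_0 phi : pval 0 phi.
Proof. by []. Qed.

Lemma sval_0 phi : (0 < d)%N -> sval 0 phi = valid phi.
Proof.
move=> hd; rewrite /sval hd /valid /pval.
have -> : d = (0 + 1 + (d - 1))%N by rewrite add0n subnKC.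
rewrite iotaD all_cat /= add0n !subn1 /= andbT /cnd /= hs0 ltnS leqn0.
by rewrite add0n.
Qed.

Lemma bnd_upf (m y : nat) (phi : nat -> nat) :
  bnd (fun k => if k == m then y else phi k) m = bnd phi m.
Proof. by case: m => //= k; rewrite ifN // neq_ltn ltnSn. Qed.

Lemma pval_upd i (m : 'I_d) (x : 'I_(n m)) :
  pval m.+1 (iv (upd i m x)) = pval m (iv i) && (x %/ s m.+1 == bnd (iv i) m)%N.
Proof.
rewrite pvalS (pval_ext _ _ (iv i)); last first.
  by move=> k hk; rewrite iv_upd ifN // neq_ltn hk.
rewrite /cnd iv_upd eqxx; congr (_ && (_ == _)).
exact: bnd_upf.
Qed.

Lemma sval_upd i (m : 'I_d) (x : 'I_(n m)) :
  sval m (iv (upd i m x)) =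
  [&& (x %/ s m.+1 < s m)%N,
      (m.+1 < d)%N ==> (iv i m.+1 %/ s m.+2 == x %% s m.+1)%N & sval m.+1 (iv i)].
Proof.
rewrite svalS // (sval_ext m.+1 _ (iv i)); last first.
  by move=> k hk; rewrite iv_upd ifN // neq_ltn hk orbT.
by rewrite /cnd /= !iv_upd eqxx ifN // neq_ltn ltnSn orbT.
Qed.

Lemma act_ext (f f' : forall k : 'I_d, 'M[R]_(n k)) (T : tensor R d n) i :
  (forall k, f k = f' k) -> act f T i = act f' T i.
Proof. by move=> h; rewrite /act; apply: eq_bigr => j _; under eq_bigr => k _ do rewrite h. Qed.

Hypothesis hd0 : (0 < d)%N.
Variable g : forall k : 'I_d, 'M[R]_(n k).
Hypothesis hg : forall k : 'I_d, g k \in unitmx.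

Definition hL (m : nat) : forall k : 'I_d, 'M[R]_(n k) :=
  fun k => if (k < m)%N then g k else 1%:M.
Definition hR (m : nat) : forall k : 'I_d, 'M[R]_(n k) :=
  fun k => if (k < m)%N then 1%:M else invmx (g k).
Definition VL (m : nat) i := act (hL m) (@TT R d n s) i.
Definition VR (m : nat) i := act (hR m) (@TT R d n s) i.

Lemma VL_step (m : 'I_d) i :
  VL m.+1 i = \sum_(x < n m) g m (i m) x * VL m (upd i m x).
Proof.
rewrite /VL (act_step (hL m) (hL m.+1) m).
- by apply: eq_bigr => x _; rewrite /hL ltnSn.
- by move=> k hk; rewrite /hL ltnS [(k <= m)%N]leq_eqVlt (negbTE hk : (nat_of_ord k == m) = false).
- by rewrite /hL ltnn.
Qed.

Lemma VR_step (m : 'I_d) i :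
  VR m i = \sum_(x < n m) invmx (g m) (i m) x * VR m.+1 (upd i m x).
Proof.
rewrite /VR (act_step (hR m.+1) (hR m) m).
- by apply: eq_bigr => x _; rewrite /hR ltnn.
- by move=> k hk; rewrite /hR ltnS [(k <= m)%N]leq_eqVlt (negbTE hk : (nat_of_ord k == m) = false).
- by rewrite /hR ltnSn.
Qed.

Definition InvL (m : nat) : Prop :=
  and (forall i, ~~ sval m (iv i) -> VL m i = 0)
  (forall i i', (forall k, (k < m)%N -> iv i k = iv i' k) ->
     sval m (iv i) -> sval m (iv i') ->
     (iv i m %/ s m.+1 = iv i' m %/ s m.+1)%N -> VL m i = VL m i').

Definition InvR (m : nat) : Prop :=
  and (forall i, ~~ pval m (iv i) -> VR m i = 0)
  (forall i i', (forall k, (m <= k)%N -> iv i k = iv i' k) ->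
     pval m (iv i) -> pval m (iv i') ->
     bnd (iv i) m = bnd (iv i') m -> VR m i = VR m i').

Lemma InvL0 : InvL 0.
Proof.
have E : forall i, VL 0 i = (valid (iv i))%:R.
  move=> i; rewrite /VL (act_ext _ (fun k => 1%:M)) ?act_id ?TTE //.
rewrite /InvL; split=> [i|i i' _]; rewrite !sval_0 // !E.
  by move/negbTE ->.
by move=> -> ->.
Qed.

Lemma InvL_S (m : 'I_d) : InvL m -> InvL m.+1.
Proof.
rewrite /InvL /InvR; move=> [IHa IHb]; split.
  move=> i hi; rewrite VL_step big1 // => x _.
  by rewrite IHa ?mulr0 // sval_upd (negbTE hi) !andbF.
move=> i i' hag hs1 hs1' hu.
have eqm : i m = i' m.
  by apply: val_inj; rewrite /= -!iv_ord hag.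
rewrite !VL_step eqm; apply: eq_bigr => x _; congr (_ * _).
have E : sval m (iv (upd i m x)) = sval m (iv (upd i' m x)).
  by rewrite !sval_upd hu hs1 hs1'.
case hsv: (sval m (iv (upd i m x))).
  apply: IHb => //.
  - move=> k hk; have hkm : (k == m) = false by apply/negbTE; rewrite neq_ltn hk.
    by rewrite !iv_upd hkm hag // ltnW.
  - by rewrite -E.
  - by rewrite !iv_upd !eqxx.
by rewrite !IHa // -?E hsv.
Qed.

Lemma InvL_all (m : nat) : (m <= d)%N -> InvL m.
Proof.
elim: m => [|m IH] hm; first exact: InvL0.
exact: (InvL_S (Ordinal hm) (IH (ltnW hm))).
Qed.

Lemma InvRd : InvR d.
Proof.
have E : forall i, VR d i = (valid (iv i))%:R.
  move=> i; rewrite /VR (act_ext _ (fun k => 1%:M)) ?act_id ?TTE //.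
  by move=> k; rewrite /hR ltn_ord.
rewrite /InvR; split=> [i|i i' _]; rewrite !E /valid.
  by move/negbTE ->.
by move=> -> ->.
Qed.

Lemma InvR_S (m : 'I_d) : InvR m.+1 -> InvR m.
Proof.
rewrite /InvL /InvR; move=> [IHa IHb]; split.
  move=> i hi; rewrite VR_step big1 // => x _.
  by rewrite IHa ?mulr0 // pval_upd (negbTE hi).
move=> i i' hag hp hp' hb.
have eqm : i m = i' m.
  by apply: val_inj; rewrite /= -!iv_ord hag.
rewrite !VR_step eqm; apply: eq_bigr => x _; congr (_ * _).
have E : pval m.+1 (iv (upd i m x)) = pval m.+1 (iv (upd i' m x)).
  by rewrite !pval_upd hb hp hp'.
case hpv: (pval m.+1 (iv (upd i m x))).
  apply: IHb => //.
  - move=> k hk; have hkm : (k == m) = false by apply/negbTE; rewrite neq_ltn hk orbT.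
    by rewrite !iv_upd hkm hag // ltnW.
  - by rewrite -E.
  - by rewrite /= !iv_upd !eqxx.
by rewrite !IHa // -?E hpv.
Qed.

Lemma InvR_all (m : nat) : (m <= d)%N -> InvR m.
Proof.
move=> hm; rewrite -(subKn hm); move: (leq_subr m d).
elim: (d - m)%N => [|t IH] ht; first by rewrite subn0; exact: InvRd.
have hlt : (d - t.+1 < d)%N by rewrite ltn_subrL hd0 andbT.
have := InvR_S (Ordinal hlt); rewrite /= subnSK //; apply; apply: IH.
exact: ltnW.
Qed.

Lemma VLR_S (m : 'I_d) : (forall i, VL m.+1 i = VR m.+1 i) -> forall i, VL m i = VR m i.
Proof.
move=> IH i; rewrite VR_step.
under eq_bigr => x _ do rewrite -IH VL_step upd_m big_distrr /=.
rewrite exchange_big /=.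
under eq_bigr => z _.
  under eq_bigr => x _ do rewrite upd_upd mulrA.
  rewrite -big_distrl /=.
  have -> : \sum_(x < n m) invmx (g m) (i m) x * g m x z = (invmx (g m) *m g m) (i m) z.
    by rewrite mxE.
  rewrite mulVmx // mxE.
  over.
rewrite (eq_bigr (fun z => VL m (upd i m z) * (z == i m)%:R)).
  by rewrite sum_delta upd_id.
by move=> z _; rewrite mulrC eq_sym.
Qed.

Lemma VLR : (forall i, act g (@TT R d n s) i = @TT R d n s i) ->
  forall m, (m <= d)%N -> forall i, VL m i = VR m i.
Proof.
move=> H m hm; rewrite -(subKn hm); move: (leq_subr m d).
elim: (d - m)%N => [|t IH] ht.
  move=> i; rewrite subn0 /VL /VR (act_ext (hL d) g); last by move=> k; rewrite /hL ltn_ord.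
  rewrite H (act_ext _ (fun k => 1%:M)) ?act_id // => k.
  by rewrite /hR ltn_ord.
have hlt : (d - t.+1 < d)%N by rewrite ltn_subrL hd0 andbT.
have := VLR_S (Ordinal hlt); rewrite /= subnSK //; apply; apply: IH.
exact: ltnW.
Qed.

Definition psi (m b c : nat) : nat -> nat :=
  fun k => if k.+1 == m then b else if k == m then (c * s m.+1)%N else 0%N.

Lemma psi_lt m b c (k : 'I_d) : (m <= d)%N -> (b < s m)%N -> (c < s m)%N ->
  (psi m b c k < n k)%N.
Proof.
move=> hm hb hc; rewrite /psi.
have hk1 := hsn k; have hk2 : (0 < s k)%N by apply: hs; apply: ltnW.
case: eqP => [E|_].
  apply: (leq_trans _ hk1); apply: (leq_trans hb); rewrite -E.
  by rewrite leq_pmull.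
case: eqP => [E|_]; last exact: hn0.
apply: (leq_trans _ hk1); rewrite E ltn_mul2r hc andbT.
by rewrite -E; apply: hs; exact: ltn_ord.
Qed.

Lemma psi_out m b c k : (m <= d)%N -> (c < s m)%N -> (d <= k)%N -> psi m b c k = 0%N.
Proof.
move=> hm hc hk; rewrite /psi.
case: eqP => [E|_]; first by move: hm; rewrite -E ltnNge (leq_trans hk).
case: eqP => [E|_] //.
have Ed : m = d by apply/eqP; rewrite eqn_leq hm -E hk.
by move: hc; rewrite Ed hsd ltnS leqn0 => /eqP ->.
Qed.

Lemma iv_psi m b c : (m <= d)%N -> (b < s m)%N -> (c < s m)%N ->
  iv (mkidx (psi m b c)) = psi m b c.
Proof.
move=> hm hb hc; apply: iv_mkidx => [k|k hk]; first exact: psi_lt.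
exact: psi_out.
Qed.

Lemma bnd_ext (m : nat) (phi phi' : nat -> nat) : (forall k, (k < m)%N -> phi k = phi' k) ->
  bnd phi m = bnd phi' m.
Proof. by case: m => //= m h; rewrite h. Qed.

Lemma bnd_psi m b c : (b < s m)%N -> bnd (psi m b c) m = b.
Proof.
case: m => [|m] hb /=.
  by move: hb; rewrite hs0 ltnS leqn0 => /eqP ->.
by rewrite /psi eqxx modn_small.
Qed.

Lemma pval_psi m b c : (b < s m)%N -> pval m (psi m b c).
Proof.
move=> hb; apply/allP => k; rewrite mem_iota add0n => /andP[_ hk].
have E1 : psi m b c k = if k.+1 == m then b else 0%N.
  by rewrite /psi; case: eqP => // _; rewrite ifN // neq_ltn hk.
have E2 : bnd (psi m b c) k = 0%N.
  case: k hk {E1} => //= k hk; rewrite /psi ifN ?ifN ?mod0n //.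
    by rewrite neq_ltn ltnW.
  by rewrite neq_ltn hk.
rewrite /cnd E1 E2; case: (eqVneq k.+1 m) => [E|_]; last by rewrite div0n.
by rewrite divn_small // E.
Qed.

Lemma sval_psi m b c : (m <= d)%N -> (c < s m)%N -> sval m (psi m b c).
Proof.
move=> hm hc; rewrite /sval; case: ifP => // hmd.
have hs1 : (0 < s m.+1)%N by apply: hs.
have -> : psi m b c m = (c * s m.+1)%N.
  by rewrite /psi eqxx ifN // neq_ltn ltnSn orbT.
rewrite mulnK // hc /=; apply/allP => k; rewrite mem_iota => /andP[hk _].
have E1 : psi m b c k = 0%N.
  have h1 : (k.+1 == m) = false by lia.
  have h2 : (k == m) = false by lia.
  by rewrite /psi h1 h2.
have E2 : bnd (psi m b c) k = 0%N.
  case: k hk {E1} => //= k hk.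
  have h1 : (k.+1 == m) = false by lia.
  rewrite /psi h1.
  case: (eqVneq k m) => [->|_]; first by rewrite modnMl.
  by rewrite mod0n.
by rewrite /cnd E1 E2 div0n.
Qed.

Section Fwd.
Hypothesis hH : forall i, act g (@TT R d n s) i = @TT R d n s i.

Definition Xn (m b c : nat) : R := VL m (mkidx (psi m b c)).

Lemma cut (m : nat) i : (m <= d)%N -> pval m (iv i) -> sval m (iv i) ->
  VL m i = Xn m (bnd (iv i) m) (iv i m %/ s m.+1).
Proof.
move=> hm hp hsv.
set b := bnd (iv i) m; set c := (iv i m %/ s m.+1)%N.
have hb : (b < s m)%N by apply: bnd_lt.
have hc : (c < s m)%N.
  move: hsv; rewrite /sval; case: ifP => [_ /andP[] //|/negbT].
  rewrite -leqNgt => hdm; have Ed : m = d by apply/eqP; rewrite eqn_leq hm.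
  by rewrite /c Ed iv_out // div0n hsd.
set phi1 := fun k => if (k < m)%N then psi m b c k else iv i k.
have hiv1 : iv (mkidx phi1) = phi1.
  apply: iv_mkidx => [k|k hk]; rewrite /phi1.
    by case: ifP => _; [exact: psi_lt | rewrite iv_ord].
  by rewrite ifN ?iv_out // -leqNgt (leq_trans hm).
have hpsi := iv_psi _ _ _ hm hb hc.
transitivity (VL m (mkidx phi1)).
  rewrite !(VLR hH _ hm); apply: (proj2 (InvR_all _ hm)) => //.
  - by move=> k hk; rewrite hiv1 /phi1 ltnNge hk.
  - rewrite hiv1 (pval_ext _ _ (psi m b c)); first exact: pval_psi.
    by move=> k hk; rewrite /phi1 hk.
  - rewrite hiv1 (bnd_ext m phi1 (psi m b c)) ?bnd_psi //.
    by move=> k hk; rewrite /phi1 hk.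
apply: (proj2 (InvL_all _ hm)).
- by move=> k hk; rewrite hiv1 hpsi /phi1 hk.
- rewrite hiv1 (sval_ext _ _ (iv i)) //.
  by move=> k hk; rewrite /phi1 ltnNge hk.
- by rewrite hpsi; apply: sval_psi.
- rewrite hiv1 hpsi /phi1 ltnn -/c.
  case: (ltnP m d) => hmd.
    by rewrite /psi ifN ?eqxx ?mulnK ?hs // neq_ltn ltnSn orbT.
  have Ed : m = d by apply/eqP; rewrite eqn_leq hm.
  rewrite /psi ifN ?eqxx; last by rewrite neq_ltn ltnSn orbT.
  move: hc; rewrite {1}Ed hsd ltnS leqn0 => /eqP ->.
  by rewrite mul0n div0n.
Qed.

Lemma step_rel (m : 'I_d) (y : 'I_(n m)) (b e : nat) : (b < s m)%N -> (e < s m.+1)%N ->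
  \sum_(c < s m) ent (g m) y (c * s m.+1 + e)%N * Xn m b c
  = ((y %/ s m.+1 == b)%N)%:R * Xn m.+1 (y %% s m.+1)%N e.
Proof.
move=> hb he.
have hmd : (m < d)%N := ltn_ord m.
have hsm : (0 < s m)%N by apply: hs; apply: ltnW.
have hsm1 : (0 < s m.+1)%N by apply: hs.
set phi := fun k => if (k < m)%N then psi m b 0 k
                    else if k == m then nat_of_ord y else psi m.+1 0 e k.
have hiv : iv (mkidx phi) = phi.
  apply: iv_mkidx => [k|k hk]; rewrite /phi.
    case: ifP => hkm; first by apply: psi_lt => //; apply: ltnW.
    case: (eqVneq (nat_of_ord k) m) => [E|_].
      by have -> : k = m by apply: val_inj.
    exact: psi_lt.
  have h1 : (k < m)%N = false by lia.
  have h2 : (k == m) = false by lia.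
  by rewrite h1 h2 psi_out.
have hpm : pval m phi.
  rewrite (pval_ext m phi (psi m b 0)); first exact: pval_psi.
  by move=> k hk; rewrite /phi hk.
have hs1 : sval m.+1 phi.
  rewrite (sval_ext m.+1 phi (psi m.+1 0 e)); first exact: sval_psi.
  move=> k hk; have h1 : (k < m)%N = false by lia.
  have h2 : (k == m) = false by lia.
  by rewrite /phi h1 h2.
have hbm : bnd phi m = b.
  rewrite (bnd_ext m phi (psi m b 0)) ?bnd_psi //.
  by move=> k hk; rewrite /phi hk.
have hphim : phi m = y by rewrite /phi ltnn eqxx.
have hu1 : (phi m.+1 %/ s m.+2)%N = e.
  have h1 : (m.+1 < m)%N = false by lia.
  have h2 : (m.+1 == m) = false by lia.
  rewrite /phi h1 h2 /psi ifN; last by lia.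
  rewrite eqxx; case: (ltnP m.+1 d) => hm1.
    by rewrite mulnK // hs.
  have Ed : m.+1 = d by lia.
  by move: he; rewrite Ed hsd ltnS leqn0 => /eqP ->; rewrite mul0n div0n.
have hym : mkidx phi m = y by apply: val_inj; rewrite /= mkidxE hphim // ltn_ord.
transitivity (VL m.+1 (mkidx phi)).
  rewrite VL_step hym.
  have E : forall x : 'I_(n m), VL m (upd (mkidx phi) m x)
     = (((x %/ s m.+1 < s m) && (x %% s m.+1 == e))%N)%:R * Xn m b (x %/ s m.+1)%N.
    move=> x.
    have hsx : sval m (iv (upd (mkidx phi) m x)) = ((x %/ s m.+1 < s m) && (x %% s m.+1 == e))%N.
      rewrite sval_upd hiv hs1 andbT hu1; congr (_ && _).
      case: (ltnP m.+1 d) => hm1 /=; first by rewrite eq_sym.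
      have Ed : m.+1 = d by lia.
      by move: he; rewrite Ed hsd ltnS leqn0 => /eqP ->; rewrite modn1.
    case hsv: (sval m (iv (upd (mkidx phi) m x))).
      rewrite -hsx hsv mul1r cut //.
      - by rewrite iv_upd hiv (bnd_upf m x phi) hbm eqxx.
      - exact: ltnW.
      - by rewrite iv_upd (pval_ext m _ phi) // => k hk; rewrite ifN ?hiv //; lia.
    by rewrite -hsx hsv mul0r (proj1 (InvL_all m (ltnW hmd))) // hsv.
  under [RHS]eq_bigr => x _ do rewrite E mulrCA -(entE _ _ _ (g m) y x).
  rewrite (sum_split _ _ _ _ _ (fun x => ent (g m) y x * Xn m b (x %/ s m.+1)%N)) //.
  apply: eq_bigr => c _; rewrite divnMDl // divn_small // addn0.
  by [].
case hp: (pval m.+1 (iv (mkidx phi))).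
  rewrite cut //; last first.
  - by rewrite hiv.
  move: hp; rewrite hiv pvalS hpm /cnd hphim hbm /= => -> ; rewrite mul1r.
  by rewrite hphim hu1.
rewrite (VLR hH m.+1 hmd) (proj1 (InvR_all m.+1 hmd)) ?hp //.
move: hp; rewrite hiv pvalS hpm /cnd hphim hbm /= => ->.
by rewrite mul0r.
Qed.

Definition Xm (m : nat) : 'M[R]_(s m) := \matrix_(b, c) Xn m b c.

Lemma entXm m (b c : nat) : (b < s m)%N -> (c < s m)%N -> ent (Xm m) b c = Xn m b c.
Proof. by move=> hb hc; rewrite ent_mx. Qed.

Lemma formula (m : 'I_d) (hX : Xm m \in unitmx) (y : 'I_(n m)) (c0 e : nat) :
  (c0 < s m)%N -> (e < s m.+1)%N ->
  ent (g m) y (c0 * s m.+1 + e)%N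
  = ent (invmx (Xm m)) c0 (y %/ s m.+1)%N * ent (Xm m.+1) (y %% s m.+1)%N e.
Proof.
move=> hc0 he.
have hsm1 : (0 < s m.+1)%N by apply: hs.
set G := fun c : 'I_(s m) => ent (g m) y (c * s m.+1 + e)%N.
pose c0' : 'I_(s m) := Ordinal hc0.
have -> : ent (g m) y (c0 * s m.+1 + e)%N = \sum_(c : 'I_(s m)) ((c0 == c)%N)%:R * G c.
  by rewrite sum_pick (insub_ord _ _ hc0).
have Hid : forall c : 'I_(s m), ((c0 == c)%N)%:R = \sum_b invmx (Xm m) c0' b * Xm m b c.
  move=> c; have := congr1 (fun M : 'M_(s m) => M c0' c) (mulVmx hX).
  by rewrite !mxE /= => ->.
under eq_bigr => c _ do rewrite Hid big_distrl /=.
rewrite exchange_big /=.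
under eq_bigr => b _.
  under eq_bigr => c _ do rewrite -mulrA mxE.
  rewrite -big_distrr /=.
  under eq_bigr => c _ do rewrite mulrC.
  rewrite step_rel //.
  over.
rewrite entXm ?ltn_pmod //.
under eq_bigr => b _ do rewrite mulrA [_ * (_%:R)]mulrC.
rewrite -big_distrl /= sum_pick.
by rewrite /ent /fent (insub_ord _ _ hc0) /=.
Qed.

Lemma Xunit_S (m : 'I_d) : Xm m \in unitmx -> Xm m.+1 \in unitmx.
Proof.
move=> hX; case hu: (Xm m.+1 \in unitmx) => //; exfalso.
have hsm1 : (0 < s m.+1)%N by apply: hs.
have hle : (s m.+1 <= n m)%N.
  apply: leq_trans (hsn m); apply: leq_pmull; apply: hs; exact: ltnW.
have : \det (Xm m.+1)^T == 0.
  by rewrite det_tr; move: hu; rewrite unitmxE unitfE => /negbT; rewrite negbK.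
case/det0P => w hw0 hw.
pose v : 'rV[R]_(n m) :=
  \row_(x < n m) oapp (fun e : 'I_(s m.+1) => w 0 e) 0 (insub (nat_of_ord x)).
have hv : v *m (g m)^T = 0.
  apply/rowP => y; rewrite !mxE.
  under eq_bigr => x _ do rewrite !mxE -(entE _ _ _ (g m) y x).
  set F := fun x : nat => oapp (fun e : 'I_(s m.+1) => w 0 e) 0 (insub x) * ent (g m) y x.
  transitivity (\sum_(e < s m.+1) F e).
    rewrite (big_ord_widen (n m) F hle) [RHS]big_mkcond /=; apply: eq_bigr => x _.
    case: ifP => // hx; rewrite /F (@insubF _ _ 'I_(s m.+1)) ?mul0r //.
  rewrite /F.
  have hsm : (0 < s m)%N by apply: hs; exact: ltnW.
  have Fe : forall e : 'I_(s m.+1), ent (g m) y e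
      = ent (invmx (Xm m)) 0 (y %/ s m.+1)%N * ent (Xm m.+1) (y %% s m.+1)%N e.
    by move=> e; have := formula m hX y 0 e hsm (ltn_ord e); rewrite mul0n add0n.
  under eq_bigr => e _ do rewrite valK /= Fe.
  pose ys : 'I_(s m.+1) := Ordinal (ltn_pmod y hsm1).
  have -> : (y %% s m.+1)%N = nat_of_ord ys by [].
  under eq_bigr => e _ do rewrite entE mulrCA.
  rewrite -big_distrr /=.
  have -> : \sum_(i < s m.+1) w 0 i * Xm m.+1 ys i = (w *m (Xm m.+1)^T) 0 ys.
    by rewrite [RHS]mxE; apply: eq_bigr => i _; rewrite [(Xm m.+1)^T _ _]mxE.
  by rewrite hw mxE mulr0.
have hv0 : v != 0.
  apply: contraNneq hw0 => hv0; apply/eqP/rowP => e.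
  have := congr1 (fun M : 'rV_(n m) => M 0 (widen_ord hle e)) hv0.
  by rewrite !mxE /= valK.
have : \det (g m)^T == 0 by apply/det0P; exists v.
by rewrite det_tr; move: (hg m); rewrite unitmxE unitfE => /negbTE ->.
Qed.

Lemma psi00 m : psi m 0 0 = fun _ => 0%N.
Proof.
apply: functional_extensionality => k; rewrite /psi mul0n.
by case: (k.+1 == m); case: (k == m).
Qed.

Lemma valid0 : valid (fun _ => 0%N).
Proof. by apply/allP => k _; rewrite /cnd div0n; case: k => //= k; rewrite mod0n. Qed.

Lemma VL0E i : VL 0 i = (valid (iv i))%:R.
Proof. by rewrite /VL (act_ext _ (fun k => 1%:M)) ?act_id ?TTE. Qed.

Lemma VLdE i : VL d i = (valid (iv i))%:R.
Proof.
rewrite /VL (act_ext _ g) ?hH ?TTE // => k.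
by rewrite /hL ltn_ord.
Qed.

Lemma iv0 : iv (mkidx (fun _ => 0%N)) = fun _ => 0%N.
Proof. by apply: iv_mkidx. Qed.

Lemma Xm_triv m : (m == 0%N) || (m == d) -> Xm m = 1%:M.
Proof.
move=> hm; have h1 : s m = 1%N by case/orP: hm => /eqP ->.
apply/matrixP => b c.
have hb : (nat_of_ord b < 1)%N by rewrite -[1%N]h1; exact: ltn_ord.
have hc : (nat_of_ord c < 1)%N by rewrite -[1%N]h1; exact: ltn_ord.
have hb0 : nat_of_ord b = 0%N by lia.
have hc0 : nat_of_ord c = 0%N by lia.
have -> : (1%:M : 'M[R]_(s m)) b c = 1.
  by rewrite mxE (_ : b == c) //; apply/eqP/val_inj; rewrite /= hb0 hc0.
rewrite mxE /Xn hb0 hc0 psi00.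
case/orP: hm => /eqP ->; by rewrite ?VL0E ?VLdE iv0 valid0.
Qed.

Lemma Xunit_all m : (m < d)%N -> Xm m \in unitmx.
Proof.
elim: m => [|m IH] hm; first by rewrite Xm_triv ?unitmx1.
have hm' : (m < d)%N by apply: ltnW.
exact: (Xunit_S (Ordinal hm') (IH hm')).
Qed.

Lemma fwd : stab_form hsn g.
Proof.
exists Xm; split.
- by rewrite Xm_triv.
- by rewrite Xm_triv // eqxx orbT.
- by move=> j /andP[_ hj]; apply: Xunit_all.
move=> k.
set r := (s k * s k.+1)%N.
have hsk : (0 < s k)%N by apply: hs; apply: ltnW.
have hsk1 : (0 < s k.+1)%N by apply: hs.
have hX := Xunit_all k (ltn_ord k).
pose B : 'M[R]_(n k - r) := \matrix_(i, j) ent (g k) (r + i)%N (r + j)%N.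
pose M : 'M[R]_(r, n k - r) := \matrix_(i, j) ent (g k) i (r + j)%N.
have Eg : g k = blk (hsn k) (kron (invmx (Xm k))^T (Xm k.+1)) M B.
  apply/matrixP => y x; rewrite blkE -(entE _ _ _ (g k) y x).
  have hxr : (r <= x)%N -> (x - r < n k - r)%N.
    by move=> h; rewrite ltn_sub2r // (leq_ltn_trans h).
  have hyr : (r <= y)%N -> (y - r < n k - r)%N.
    by move=> h; rewrite ltn_sub2r // (leq_ltn_trans h).
  case: ifP => hy; case: ifP => hx.
  - have -> : nat_of_ord y = nat_of_ord (Ordinal hy : 'I_r) by [].
    have -> : nat_of_ord x = nat_of_ord (Ordinal hx : 'I_r) by [].
    rewrite [in RHS]entE kronE ent_tr /=.
    rewrite {1}(divn_eq x (s k.+1)) formula //; last by rewrite ltn_pmod.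
    by rewrite ltn_divLR.
  - rewrite /M (ent_mx _ _ _ (fun a b => ent (g k) a (r + b)%N)); first by rewrite subnKC // leqNgt hx.
    + by [].
    + by apply: hxr; rewrite leqNgt hx.
  - rewrite (divn_eq x (s k.+1)) formula //; first last.
    + by rewrite ltn_pmod.
    + by rewrite ltn_divLR.
    rewrite /ent fent_outr ?mul0r //.
    by rewrite leq_divRL // leqNgt hy.
  - rewrite /B (ent_mx _ _ _ (fun a b => ent (g k) (r + a)%N (r + b)%N)); first by rewrite !subnKC // leqNgt ?hx ?hy.
    + by apply: hyr; rewrite leqNgt hy.
    + by apply: hxr; rewrite leqNgt hx.
exists B, M; split => //.
move: (hg k); rewrite Eg /blk unit_castmx !unitmxE det_ublock unitfE mulf_eq0 negb_or.
by case/andP => _; rewrite unitfE.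
Qed.

End Fwd.

Lemma ent1 (p a b : nat) : (a < p)%N -> ent (1%:M : 'M[R]_p) a b = ((a == b)%N)%:R.
Proof.
move=> ha; rewrite /ent /fent (insub_ord _ _ ha) /=.
case: (@insubP _ _ 'I_p b) => [b' _ eb|hb] /=; first by rewrite mxE -eb.
by rewrite (_ : (a == b)%N = false) //; apply/negbTE; apply: contraNneq hb => <-.
Qed.

Lemma ent_mul (p : nat) (P Q : 'M[R]_p) (a b : nat) :
  \sum_(c < p) ent P a c * ent Q c b = ent (P *m Q) a b.
Proof.
rewrite /ent /fent.
case: (@insubP _ _ 'I_p a) => [a' _ _|_] /=; last by rewrite big1 // => c _; rewrite mul0r.
case: (@insubP _ _ 'I_p b) => [b' _ _|_] /=; last by rewrite big1 // => c _; rewrite valK /= mulr0.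
by rewrite mxE; apply: eq_bigr => c _; rewrite valK.
Qed.

Section Bwd.
Variable A : forall j : nat, 'M[R]_(s j).
Hypothesis hA0 : A 0%N = 1%:M.
Hypothesis hAd : A d = 1%:M.
Hypothesis hAu : forall j : nat, (0 < j < d)%N -> A j \in unitmx.
Hypothesis hgA : forall k : 'I_d, exists (B : 'M[R]_(n k - s k * s k.+1))
                 (M : 'M[R]_(s k * s k.+1, n k - s k * s k.+1)),
            B \in unitmx /\ g k = blk (hsn k) (kron (invmx (A k))^T (A k.+1)) M B.

Lemma hAu' (j : nat) : (j < d)%N -> A j \in unitmx.
Proof.
case: j => [|j] hj; first by rewrite hA0 unitmx1.
by apply: hAu.
Qed.

Lemma gform (m : 'I_d) (y : 'I_(n m)) (c u : nat) : (c < s m)%N -> (u < s m.+1)%N ->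
  ent (g m) y (c * s m.+1 + u)%N
  = ent (invmx (A m)) c (y %/ s m.+1)%N * ent (A m.+1) (y %% s m.+1)%N u.
Proof.
move=> hc hu.
have hsm1 : (0 < s m.+1)%N by apply: hs.
have [B [M [_ Eg]]] := hgA m.
set r := (s m * s m.+1)%N.
have hxr : (c * s m.+1 + u < r)%N.
  by rewrite /r; have := hc; nia.
have hxn : (c * s m.+1 + u < n m)%N by apply: leq_trans hxr (hsn m).
have -> : (c * s m.+1 + u)%N = nat_of_ord (Ordinal hxn) by [].
rewrite entE Eg blkE /= hxr.
have Ediv : ((c * s m.+1 + u) %/ s m.+1)%N = c by rewrite divnMDl // divn_small ?addn0.
have Emod : ((c * s m.+1 + u) %% s m.+1)%N = u by rewrite modnMDl modn_small.
case: ifP => hy.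
  have -> : nat_of_ord y = nat_of_ord (Ordinal hy : 'I_r) by [].
  have -> : (c * s m.+1 + u)%N = nat_of_ord (Ordinal hxr : 'I_r) by [].
  by rewrite entE kronE ent_tr /= Ediv Emod.
rewrite /ent fent_outr ?mul0r //.
by rewrite leq_divRL // leqNgt hy.
Qed.

Definition Qm (m : nat) i : R :=
  (pval m (iv i) && sval m (iv i))%:R * ent (A m) (bnd (iv i) m) (iv i m %/ s m.+1)%N.

Lemma VL_Q_S (m : 'I_d) : (forall i, VL m i = Qm m i) -> forall i, VL m.+1 i = Qm m.+1 i.
Proof.
move=> IH i; rewrite VL_step.
have hsm1 : (0 < s m.+1)%N by apply: hs.
have hsm : (0 < s m)%N by apply: hs; apply: ltnW.
set u := (iv i m.+1 %/ s m.+2)%N.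
set bm := bnd (iv i) m.
set y := i m.
have Eu : forall x : 'I_(n m), ((m.+1 < d)%N ==> (u == x %% s m.+1)%N) = (x %% s m.+1 == u)%N.
  move=> x; case: (ltnP m.+1 d) => hm1 /=; first by rewrite eq_sym.
  have Ed : m.+1 = d by apply/eqP; rewrite eqn_leq hm1 ltn_ord.
  by rewrite /u Ed iv_out // div0n hsd modn1.
have EQ : forall x : 'I_(n m), Qm m (upd i m x)
   = (pval m (iv i) && sval m.+1 (iv i))%:R *
     ((((x %/ s m.+1 < s m) && (x %% s m.+1 == u))%N)%:R * ent (A m) bm (x %/ s m.+1)%N).
  move=> x; rewrite /Qm sval_upd Eu.
  rewrite (pval_ext m _ (iv i)); last first.
    by move=> k hk; rewrite iv_upd ifN //; lia.
  rewrite iv_upd bnd_upf eqxx -/bm mulrA -natrM; congr (_%:R * _).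
  by rewrite mulnb; case: (pval _ _); case: (_ < _)%N; case: (_ == _)%N; case: (sval _ _).
under eq_bigr => x _ do rewrite IH EQ mulrCA -(entE _ _ _ (g m) y x).
rewrite -big_distrr /=.
rewrite /Qm pvalS.
case hps: (pval m (iv i) && sval m.+1 (iv i)); last first.
  rewrite mul0r; case: (pval m (iv i)) hps => /= [->|_]; by rewrite ?andbF mul0r.
rewrite mul1r; case/andP: hps => hp hsv; rewrite hp hsv /=.
have hu : (u < s m.+1)%N.
  move: hsv; rewrite /sval; case: ifP => [_ /andP[] //|/negbT].
  rewrite -leqNgt => hdm; have Ed : m.+1 = d by apply/eqP; rewrite eqn_leq hdm ltn_ord.
  by rewrite /u Ed iv_out // div0n hsd.
under eq_bigr => x _ do rewrite mulrCA.
rewrite (sum_split _ _ _ _ _ (fun x => ent (g m) y x * ent (A m) bm (x %/ s m.+1)%N)) //.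
have Ed : forall c : 'I_(s m), ((c * s m.+1 + u) %/ s m.+1)%N = c.
  by move=> c; rewrite divnMDl // divn_small ?addn0.
under eq_bigr => c _ do rewrite gform // Ed mulrAC [_ * ent (A m) _ _]mulrC.
rewrite -big_distrl /= ent_mul mulmxV ?hAu' // ent1; last by apply: bnd_lt; apply: ltnW.
by rewrite /cnd andbT [bm == _]eq_sym /u /bm /y iv_ord.
Qed.

Lemma VL_Q_all (m : nat) : (m <= d)%N -> forall i, VL m i = Qm m i.
Proof.
elim: m => [|m IH] hm i.
  rewrite VL0E /Qm sval_0 // hA0 /=.
  case hv: (valid (iv i)); last by rewrite mul0r.
  rewrite mul1r ent1 ?hs0 //.
  move: hv; rewrite /valid /pval.
  have -> : d = (0 + 1 + (d - 1))%N by rewrite add0n subnKC.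
  by rewrite iotaD all_cat /= /cnd /= andbT => /andP[/eqP -> _].
have hm' : (m < d)%N by apply: hm.
exact: (VL_Q_S (Ordinal hm') (IH (ltnW hm)) i).
Qed.

Lemma bwd : forall i, act g (@TT R d n s) i = @TT R d n s i.
Proof.
move=> i.
have -> : act g (@TT R d n s) i = VL d i.
  by rewrite /VL (act_ext (hL d) g) // => k; rewrite /hL ltn_ord.
rewrite VL_Q_all // /Qm sval_d andbT hAd TTE /valid.
case: (pval d (iv i)); last by rewrite mul0r.
rewrite mul1r ent1; last by apply: bnd_lt.
have hb : (bnd (iv i) d < 1)%N by rewrite -hsd; apply: bnd_lt.
by rewrite iv_out // div0n (_ : bnd (iv i) d = 0%N) //; lia.
Qed.

End Bwd.

End Main.

Theorem mainTheorem12 (R : realType) (d : nat) (n s : nat -> nat)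
  (hd : (3 <= d)%N)
  (hn : forall k : 'I_d, (2 <= n k)%N)
  (hs0 : s 0%N = 1%N) (hsd : s d = 1%N)
  (hspos : forall j : nat, (0 < j < d)%N -> (0 < s j)%N)
  (hsn : forall k : 'I_d, (s k * s k.+1 <= n k)%N)
  (g : forall k : 'I_d, 'M[R]_(n k))
  (hg : forall k : 'I_d, g k \in unitmx) :
  (forall i : idx d n, act g (@TT R d n s) i = @TT R d n s i)
  <-> stab_form hsn g.
Proof.
have hn0 : forall k : 'I_d, (0 < n k)%N by move=> k; apply: leq_trans (hn k).
have hs' : forall j : nat, (j <= d)%N -> (0 < s j)%N.
  move=> j hj; case: (posnP j) => [->|hj0]; first by rewrite hs0.
  case: (ltnP j d) => hjd; first by apply: hspos; rewrite hj0.
  have -> : j = d by apply/eqP; rewrite eqn_leq hj hjd.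
  by rewrite hsd.
have hd0 : (0 < d)%N by apply: leq_trans hd.
split.
  by move=> H; exact: (fwd R d n s hn0 hs' hs0 hsd hsn hd0 g hg H).
case=> A [hA0 hAd hAu hgA].
exact: (bwd R d n s hn0 hs' hs0 hsd hsn hd0 g A hA0 hAd hAu hgA).
Qed.
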